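(* Let $f^*:\mathcal X\to\{-1,+1\}$ be a Bayes optimal classifier, i.e. a minimizer of $\mathbb P(f(X)\neq Y)$ over measurable $f:\mathcal X\to\{-1,+1\}$, and assume $\mathbb P(f^*(X)=-1\mid Y=+1)+\mathbb P(f^*(X)=+1\mid Y=-1)<1$. Define the $2\times 2$ matrix $\Delta$, indexed by $y,y'\in\{-1,+1\}$ (with $-1$ as the first index and $+1$ as the second), by $$\Delta_{y,y'}=\mathbb P\bigl(f^*(X)=y,\ \tilde Y=y'\bigr)-\mathbb P\bigl(f^*(X)=y\bigr)\,\mathbb P\bigl(\tilde Y=y'\bigr).$$ If $e_{-1}+e_{+1}<1$, then $\mathrm{Sgn}(\Delta)=I_{2\times 2}$, the identity matrix, where $\mathrm{Sgn}$ is applied entrywise.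
   Context: Let $\mathcal X\subseteq\mathbb R^d$ and let $(X,Y)$ be a random pair with distribution $\mathcal D$ on $\mathcal X\times\{-1,+1\}$, with $p:=\mathbb P(Y=+1)\in(0,1)$. A noisy label $\tilde Y\in\{-1,+1\}$ is observed instead of $Y$, with noise rates $e_{+1}:=\mathbb P(\tilde Y=-1\mid Y=+1)$ and $e_{-1}:=\mathbb P(\tilde Y=+1\mid Y=-1)$, and $\tilde Y$ is conditionally independent of $X$ given $Y$. For real $x$, $\mathrm{Sgn}(x)=1$ if $x>0$ and $\mathrm{Sgn}(x)=0$ otherwise. *)

(* Defs.v *)
From HB Require Import structures.
From mathcomp Require Import all_boot all_order all_algebra.
From mathcomp Require Import all_classical all_reals all_analysis.
Set Implicit Arguments. Unset Strict Implicit. Unset Printing Implicit Defensive.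
Import Order.TTheory GRing.Theory Num.Theory.
Local Open Scope classical_set_scope.
Local Open Scope ring_scope.

(* Labels {-1,+1} are encoded by bool: true <-> +1, false <-> -1. *)

Section Defs.
Context {d : measure_display} {T : measurableType d} {R : realType}.

Definition prb (P : probability T R) (A : set T) : R := fine (P A).

Definition cprb (P : probability T R) (A B : set T) : R :=
  prb P (A `&` B) / prb P B.
End Defs.

Definition Sgn {R : realType} (x : R) : R := if 0 < x then 1 else 0.

(* index of the 2x2 matrix: 0 <-> label -1 (false), 1 <-> label +1 (true) *)
Definition lab_of (i : 'I_2) : bool := (nat_of_ord i == 1)%N.

Definition Delta {d dX : measure_display} {T : measurableType d}
  {Xt : measurableType dX} {R : realType} (P : probability T R)
  (fstar : Xt -> bool) (X : T -> Xt) (Yt : T -> bool) : 'M[R]_2 :=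
  \matrix_(i < 2, j < 2)
    (prb P [set t | fstar (X t) = lab_of i /\ Yt t = lab_of j]
     - prb P [set t | fstar (X t) = lab_of i] * prb P [set t | Yt t = lab_of j]).

Definition bayes_optimal {d dX : measure_display} {T : measurableType d}
  {Xt : measurableType dX} {R : realType} (P : probability T R)
  (X : T -> Xt) (Y : T -> bool) (fstar : Xt -> bool) : Prop :=
  measurable_fun setT fstar /\
  forall f : Xt -> bool, measurable_fun setT f ->
    prb P [set t | fstar (X t) <> Y t] <= prb P [set t | f (X t) <> Y t].

Definition cond_indep_given {d dX : measure_display} {T : measurableType d}
  {Xt : measurableType dX} {R : realType} (P : probability T R)
  (Yt : T -> bool) (X : T -> Xt) (Y : T -> bool) : Prop :=
  forall (B : set Xt), measurable B -> forall y y' : bool,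
    cprb P ([set t | Yt t = y'] `&` (X @^-1` B)) [set t | Y t = y]
    = cprb P [set t | Yt t = y'] [set t | Y t = y]
      * cprb P (X @^-1` B) [set t | Y t = y].

(* Main.v *)
Require Import Defs.
From HB Require Import structures.
From mathcomp Require Import all_boot all_order all_algebra.
From mathcomp Require Import all_classical all_reals all_analysis.
From mathcomp Require Import ring lra.
Import Order.TTheory GRing.Theory Num.Theory.
Local Open Scope classical_set_scope.
Local Open Scope ring_scope.


Section H.
Local Set Implicit Arguments. Local Unset Strict Implicit.
Context {d : measure_display} {T : measurableType d} {R : realType}.
Variable P : probability T R.

Lemma prb_split (A S : set T) : measurable A -> measurable S ->
  prb P A = prb P (A `&` S) + prb P (A `&` ~` S).
Proof.
move=> mA mS; rewrite /prb -fineD ?fin_num_measure//; last 2 first.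
- exact: measurableI.
- by apply: measurableI => //; exact: measurableC.
congr fine; rewrite -measureU //.
- by rewrite -setIUr setUv setIT.
- exact: measurableI.
- by apply: measurableI => //; exact: measurableC.
- by apply/seteqP; split => t //= [[_ h1] [_ h2]].
Qed.

Lemma mpre (Z : T -> bool) (b : bool) : measurable_fun setT Z ->
  measurable [set t | Z t = b].
Proof.
move=> mZ; have := mZ measurableT [set b] I.
by rewrite setTI.
Qed.

Lemma prbT : prb P setT = 1.
Proof. by rewrite /prb probability_setT. Qed.

Lemma cprbK (A S : set T) : prb P S != 0 -> prb P (A `&` S) = cprb P A S * prb P S.
Proof. by move=> h; rewrite /cprb divfK. Qed.

Lemma cprb_compl (A S : set T) : measurable A -> measurable S -> prb P S != 0 ->
  cprb P (~` A) S = 1 - cprb P A S.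
Proof.
move=> mA mS h; rewrite /cprb.
have := prb_split mS mA; rewrite (setIC S A) (setIC S (~` A)) => e.
move: h; rewrite e => h; field; exact: h.
Qed.

Lemma delta_formula (A E S : set T) : measurable A -> measurable E -> measurable S ->
  0 < prb P S -> 0 < prb P (~` S) ->
  prb P (E `&` A `&` S) = cprb P E S * cprb P A S * prb P S ->
  prb P (E `&` A `&` ~` S) = cprb P E (~` S) * cprb P A (~` S) * prb P (~` S) ->
  prb P (E `&` A) - prb P A * prb P E =
  prb P S * prb P (~` S) * (cprb P A S - cprb P A (~` S)) * (cprb P E S - cprb P E (~` S)).
Proof.
move=> mA mE mS hs hs' h1 h0.
have hsum : prb P S + prb P (~` S) = 1.
  by rewrite -prbT (prb_split measurableT mS) !setTI.
rewrite (prb_split (measurableI _ _ mE mA) mS) h1 h0.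
rewrite (prb_split mA mS) (prb_split mE mS).
rewrite !cprbK ?gt_eqF //.
move: hsum; set s := prb P S; set s' := prb P (~` S).
move=> hsum; have -> : s' = 1 - s by lra.
ring.
Qed.

Lemma setC_bool (Z : T -> bool) : [set t | Z t = false] = ~` [set t | Z t = true].
Proof. by apply/seteqP; split => t /=; case: (Z t). Qed.

End H.

Theorem lemma1 (d dX : measure_display) (T : measurableType d)
  (Xt : measurableType dX) (R : realType) (P : probability T R)
  (X : T -> Xt) (Y Yt : T -> bool)
  (mX : measurable_fun setT X) (mY : measurable_fun setT Y)
  (mYt : measurable_fun setT Yt)
  (hp : 0 < prb P [set t | Y t = true] < 1)
  (hind : cond_indep_given P Yt X Y)
  (fstar : Xt -> bool)
  (hbayes : bayes_optimal P X Y fstar)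
  (hf : cprb P [set t | fstar (X t) = false] [set t | Y t = true]
        + cprb P [set t | fstar (X t) = true] [set t | Y t = false] < 1)
  (hnoise : cprb P [set t | Yt t = false] [set t | Y t = true]
            + cprb P [set t | Yt t = true] [set t | Y t = false] < 1) :
  map_mx Sgn (Delta P fstar X Yt) = 1%:M.
Proof.
have mfX : measurable_fun setT (fstar \o X).
  exact: measurableT_comp (proj1 hbayes) mX.
have mF : forall y, measurable [set t | fstar (X t) = y].
  by move=> y; exact: (mpre _ mfX).
have mE : forall y, measurable [set t | Yt t = y] by move=> y; exact: mpre.
have mS : measurable [set t | Y t = true] by exact: mpre.
set S := [set t | Y t = true] in hp mS hf hnoise *.
have hS' : [set t | Y t = false] = ~` S by exact: setC_bool.
have hp' : 0 < prb P (~` S).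
  have := prb_split P measurableT mS; rewrite prbT !setTI.
  case/andP: hp => _ ? ?; lra.
case/andP: hp => hp0 hp1.
have key : forall y y',
  prb P [set t | fstar (X t) = y /\ Yt t = y'] -
  prb P [set t | fstar (X t) = y] * prb P [set t | Yt t = y'] =
  prb P S * prb P (~` S) *
  (cprb P [set t | fstar (X t) = y] S - cprb P [set t | fstar (X t) = y] (~` S)) *
  (cprb P [set t | Yt t = y'] S - cprb P [set t | Yt t = y'] (~` S)).
  move=> y y'.
  have -> : [set t | fstar (X t) = y /\ Yt t = y'] =
            [set t | Yt t = y'] `&` [set t | fstar (X t) = y].
    by apply/seteqP; split => t /= [? ?].
  have mB : measurable [set x | fstar x = y].
    have := proj1 hbayes measurableT [set y] I; by rewrite setTI.
  apply: delta_formula => //.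
  - have h := hind _ mB true y'.
    rewrite cprbK ?gt_eqF //.
    exact: (f_equal (fun z => z * prb P S) h).
  - have h := hind _ mB false y'; rewrite hS' in h.
    rewrite cprbK ?gt_eqF //.
    exact: (f_equal (fun z => z * prb P (~` S)) h).
rewrite hS' in hf hnoise.
have hF : [set t | fstar (X t) = false] = ~` [set t | fstar (X t) = true].
  exact: (setC_bool (fun t => fstar (X t))).
have hE : [set t | Yt t = false] = ~` [set t | Yt t = true] by exact: setC_bool.
rewrite hF in hf; rewrite hE in hnoise.
rewrite !cprb_compl ?gt_eqF // in hf hnoise; try exact: mF; try exact: mE.
set a1 := cprb P [set t | fstar (X t) = true] S in hf.
set a0 := cprb P [set t | fstar (X t) = true] (~` S) in hf.
set e1 := cprb P [set t | Yt t = true] S in hnoise.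
set e0 := cprb P [set t | Yt t = true] (~` S) in hnoise.
have ha : 0 < a1 - a0 by lra.
have he : 0 < e1 - e0 by lra.
have hpos : 0 < prb P S * prb P (~` S) * (a1 - a0) * (e1 - e0).
  by rewrite !mulr_gt0.
apply/matrixP => i j; rewrite !mxE key.
rewrite /lab_of.
have L0 : (0%N == 1%N) = false := erefl.
have L1 : (1%N == 1%N) = true := erefl.
case: i => [[|[|i]] Hi] //; case: j => [[|[|j]] Hj] //=; rewrite ?L0 ?L1.
- rewrite !hF !hE.
  rewrite !cprb_compl ?gt_eqF //; try exact: mF; try exact: mE; try exact: measurableC.
  rewrite -/a1 -/a0 -/e1 -/e0 /Sgn.
  by rewrite ifT //; move: hpos; congr (0 < _); ring.
- rewrite !hF.
  rewrite !cprb_compl ?gt_eqF //; try exact: mF; try exact: measurableC.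
  rewrite -/a1 -/a0 -/e1 -/e0 /Sgn.
  rewrite ifF //; apply/negbTE; rewrite -leNgt.
  have -> : prb P S * prb P (~` S) * (1 - a1 - (1 - a0)) * (e1 - e0)
    = - (prb P S * prb P (~` S) * (a1 - a0) * (e1 - e0)) by ring.
  lra.
- rewrite !hE.
  rewrite !cprb_compl ?gt_eqF //; try exact: mE; try exact: measurableC.
  rewrite -/a1 -/a0 -/e1 -/e0 /Sgn.
  rewrite ifF //; apply/negbTE; rewrite -leNgt.
  have -> : prb P S * prb P (~` S) * (a1 - a0) * (1 - e1 - (1 - e0))
    = - (prb P S * prb P (~` S) * (a1 - a0) * (e1 - e0)) by ring.
  lra.
- by rewrite /Sgn ifT.
Qed.
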